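(* Let $w\ge 1$ and let $G$ be a graph of modular width at most $w$. Then every shortest path in $G$ has length at most $w$. Moreover, if $|V(G)|>w$ and $V_1,\dots,V_r$ ($r\le w$) is a modular decomposition of $G$, then every shortest path in $G$ of length at least three is either fully contained in some $G[V_i]$, or contains at most one vertex from each $V_i$, $i\in[r]$.
   Context: All graphs are finite, simple and undirected; the length of a path is its number of edges. A module of $G$ is a set $M\subseteq V(G)$ such that for all $u,v\in M$ and $x\in V(G)\setminus M$, $\{u,x\}\in E(G)$ implies $\{v,x\}\in E(G)$. A graph $G$ has modular width at most $w$ if either $|V(G)|\le w$, or there is a partition of $V(G)$ into at most $w$ sets $V_1,\dots,V_r$ such that each $V_i$ is a module of $G$ and each $G[V_i]$ has modular width at most $w$. A modular decomposition of $G$ (with respect to $w$) is a non-trivial partition of $V(G)$ into at most $w$ sets $V_1,\dots,V_r$, each a module of $G$ with $G[V_i]$ of modular width at most $w$. *)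

(* Defs.v *)
From mathcomp Require Import all_boot.
Set Implicit Arguments. Unset Strict Implicit. Unset Printing Implicit Defensive.

Section Graphs.
Variables (T : finType) (e : rel T).

Definition simple_graph : Prop := symmetric e /\ irreflexive e.

Definition is_module (S M : {set T}) : Prop :=
  M \subset S /\
  forall u v x, u \in M -> v \in M -> x \in S :\: M -> e u x -> e v x.

(* mw_le w S : the induced subgraph G[S] has modular width at most w. *)
Inductive mw_le (w : nat) : {set T} -> Prop :=
  | mw_small (S : {set T}) : #|S| <= w -> mw_le w S
  | mw_split (S : {set T}) (P : {set {set T}}) :
      partition P S -> #|P| <= w ->
      (forall V, V \in P -> is_module S V) ->
      (forall V, V \in P -> mw_le w V) ->
      mw_le w S.

Definition mw_graph_le (w : nat) : Prop := mw_le w [set: T].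

Definition modular_decomposition (w : nat) (P : {set {set T}}) : Prop :=
  partition P [set: T] /\ P != [set [set: T]] /\ #|P| <= w /\
  (forall V, V \in P -> is_module [set: T] V) /\
  (forall V, V \in P -> mw_le w V).

(* The path with vertex sequence x :: p (length = size p) is a shortest path
   of G: a path without repeated vertices, and no walk between its endpoints
   has fewer edges. *)
Definition shortest_path (x : T) (p : seq T) : Prop :=
  path e x p /\ uniq (x :: p) /\
  forall q, path e x q -> last x q = last x p -> size p <= size q.

End Graphs.

(* Main.v *)
Require Import Defs.
From mathcomp Require Import all_boot.
From mathcomp Require Import zify.
Set Implicit Arguments. Unset Strict Implicit.

Section S.
Variables (T : finType) (e : rel T).
Hypothesis esym : symmetric e.

Definition sp (S : {set T}) (x : T) (p : seq T) : Prop :=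
  [/\ all (fun y => y \in S) (x :: p), path e x p, uniq (x :: p) &
   forall q, all (fun y => y \in S) q -> path e x q -> last x q = last x p -> size p <= size q].

Lemma last_take_nth (x : T) p i : i <= size p -> last x (take i p) = nth x (x :: p) i.
Proof.
elim: p x i => [|y p IH] x i /=; first by case: i.
case: i => [|i] //= Hi. by rewrite IH // (set_nth_default y).
Qed.

Lemma last_drop (x y : T) p n : n < size p -> last y (drop n p) = last x p.
Proof.
elim: p x y n => [|z p IH] x y n //=.
case: n => [|n] Hn /=.
  by case: p {IH Hn}.
by case: p IH Hn => [|u p] IH Hn //=; rewrite (IH z).
Qed.

Lemma shortcut S x p i j : sp S x p -> i < j -> j <= size p ->
  e (nth x (x :: p) i) (nth x (x :: p) j) -> j <= i.+1.
Proof.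
move=> [HS Hp Hu Hmin] Hij Hj He.
rewrite leqNgt; apply/negP => Hlt.
have Hj1 : j.-1 < size p by lia.
set q := take i p ++ drop j.-1 p.
have Hsz : size q < size p.
  rewrite /q size_cat size_takel ?size_drop; lia.
suff : size p <= size q by lia.
apply: Hmin.
- apply/allP => y; rewrite mem_cat => /orP [/mem_take|/mem_drop] Hy;
  by move/allP: HS; apply; rewrite inE Hy orbT.
- rewrite /q cat_path; apply/andP; split.
    by move: Hp; rewrite -{1}(cat_take_drop i p) cat_path => /andP [].
  rewrite last_take_nth; last lia.
  rewrite (drop_nth x Hj1) /=.
  have -> : nth x p j.-1 = nth x (x :: p) j by case: j Hij Hj Hlt He Hj1 {q Hsz}.
  rewrite He /=.
  have -> : j.-1.+1 = j by lia.
  move: Hp; rewrite -{1}(cat_take_drop j p) cat_path => /andP [_].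
  by rewrite last_take_nth.
- by rewrite /q last_cat (last_drop x).
Qed.

Lemma near S x p i j : sp S x p -> i <= size p -> j <= size p ->
  e (nth x (x :: p) i) (nth x (x :: p) j) -> i <= j.+1 /\ j <= i.+1.
Proof.
move=> Hsp Hi Hj He; case: (ltngtP i j) => Hij.
- by have := shortcut Hsp Hij Hj He; lia.
- by rewrite esym in He; have := shortcut Hsp Hij Hi He; lia.
- by subst; lia.
Qed.

Lemma adj S x p i : sp S x p -> i < size p -> e (nth x (x :: p) i) (nth x (x :: p) i.+1).
Proof. by move=> [_ Hp _ _] Hi; move/(pathP x): Hp; apply. Qed.

Lemma inS S x p i : sp S x p -> i <= size p -> nth x (x :: p) i \in S.
Proof. by move=> [HS _ _ _] Hi; move/allP: HS; apply; rewrite mem_nth. Qed.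

Lemma core S M x p : sp S x p -> is_module e S M -> 3 <= size p ->
  (exists l, l <= size p /\ nth x (x :: p) l \notin M) ->
  forall i j, i < j -> j <= size p -> nth x (x :: p) i \in M -> nth x (x :: p) j \in M -> False.
Proof.
move=> Hsp [HMS Hmod] H3 [l [Hl HlM]] i j Hij Hj HiM HjM.
set f := nth x (x :: p).
have Hout : forall k, k <= size p -> f k \notin M -> f k \in S :\: M.
  by move=> k Hk HkM; rewrite in_setD HkM (inS Hsp Hk).
have [b [Hb HbM Hbe]] : exists b, [/\ b <= size p, f b \notin M &
     forall k, k <= size p -> f k \in M -> e (f k) (f b)].
  case: (boolP (has (fun t => (f t \in M) != (f t.+1 \in M)) (iota 0 (size p)))).
  - move/hasP => [t]; rewrite mem_iota => /andP [_ Ht] /= Hd.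
    have Ha := adj Hsp Ht.
    case HtM: (f t \in M) Hd => /= Hd.
    + have Ht1 : f t.+1 \notin M by move: Hd; case: (f t.+1 \in M).
      exists t.+1; split; [lia | done | ].
      move=> k Hk HkM; apply: (Hmod (f t)) => //; exact: Hout.
    + have Ht1 : f t.+1 \in M by move: Hd; case: (f t.+1 \in M).
      exists t; split; [lia | by rewrite HtM | ].
      move=> k Hk HkM; apply: (Hmod (f t.+1)) => //.
        by apply: Hout; rewrite ?HtM //; lia.
      by rewrite esym.
  - move/hasPn => Hn; exfalso.
    have Hall : forall t, t <= size p -> (f t \in M) = (f 0 \in M).
      elim => // t IH Ht.
      have := Hn t; rewrite mem_iota /= => /(_ Ht) /negbNE /eqP <-.
      by apply: IH; lia.
    by move: HlM HiM; rewrite Hall // (Hall i) //; [move=> /negbTE -> | lia].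
have key : forall i j, i < j -> j <= size p -> f i \in M -> f j \in M -> j = i.+2.
  move=> i' j' Hij' Hj' Hi' Hj''.
  have Hi'' : i' <= size p by lia.
  have [h1 h2] := near Hsp Hi'' Hb (Hbe _ Hi'' Hi').
  have [h3 h4] := near Hsp Hj' Hb (Hbe _ Hj' Hj'').
  have Hbi : b != i' by apply/eqP => Eb; move: HbM; rewrite Eb Hi'.
  have Hbj : b != j' by apply/eqP => Eb; move: HbM; rewrite Eb Hj''.
  lia.
have Eij := key i j Hij Hj HiM HjM.
have Hi : i <= size p by lia.
case: (leqP j.+1 (size p)) => Hj1.
- case HM: (f j.+1 \in M).
    by have := key j j.+1 (ltnSn _) Hj1 HjM HM; lia.
  have Ha := adj Hsp Hj1.
  have Hx : e (f i) (f j.+1).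
    by apply: (Hmod (f j)) => //; apply: Hout => //; rewrite HM.
  by have := near Hsp Hi Hj1 Hx; lia.
- have Hi1 : i.-1 < i by lia.
  have Hi1' : i.-1 <= size p by lia.
  case HM: (f i.-1 \in M).
    by have := key i.-1 i Hi1 Hi HM HiM; lia.
  have Ha := adj Hsp (leq_trans Hi1 Hi).
  have E : i.-1.+1 = i by lia.
  rewrite E esym in Ha.
  have Hx : e (f j) (f i.-1).
    by apply: (Hmod (f i)) => //; apply: Hout => //; rewrite HM.
  by have := near Hsp Hj Hi1' Hx; lia.
Qed.
Lemma two S M x p y1 y2 : sp S x p -> is_module e S M -> 3 <= size p ->
  ~~ all (fun y => y \in M) (x :: p) -> y1 \in x :: p -> y2 \in x :: p ->
  y1 \in M -> y2 \in M -> y1 = y2.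
Proof.
move=> Hsp Hmod H3 /allPn [z Hz HzM] H1 H2 M1 M2.
have Hl : exists l, l <= size p /\ nth x (x :: p) l \notin M.
  exists (index z (x :: p)); rewrite nth_index //; split => //.
  by have := index_mem z (x :: p); rewrite Hz /=.
have Hi1 := index_mem y1 (x :: p); rewrite H1 /= in Hi1.
have Hi2 := index_mem y2 (x :: p); rewrite H2 /= in Hi2.
have E1 := nth_index x H1; have E2 := nth_index x H2.
case: (ltngtP (index y1 (x :: p)) (index y2 (x :: p))) => Hlt.
- by exfalso; apply: (core Hsp Hmod H3 Hl Hlt); rewrite ?E1 ?E2.
- by exfalso; apply: (core Hsp Hmod H3 Hl Hlt); rewrite ?E1 ?E2.
- by rewrite -E1 Hlt E2.
Qed.

Lemma count_le1 (a : pred T) (s : seq T) :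
  (forall y1 y2, y1 \in s -> y2 \in s -> a y1 -> a y2 -> y1 = y2) -> uniq s -> count a s <= 1.
Proof.
elim: s => [|y s IH] //= H /andP [Hy Hu].
case Ha: (a y) => /=.
- rewrite (eq_in_count (a2 := pred0)) ?count_pred0 // => z Hz /=.
  apply/negP => Hz'; have E := H y z; rewrite inE eqxx Ha Hz' inE Hz orbT in E.
  by move: Hy; rewrite (E isT isT isT isT) Hz.
- apply: IH => // y1 y2 H1 H2; apply: H; by rewrite inE ?H1 ?H2 orbT.
Qed.

Lemma mw_bound w S : mw_le e w S -> forall x p, sp S x p -> size p <= w.
Proof.
elim => {S} [S HS | S P Hpart HPw Hmods _ IH] x p Hsp.
- case: Hsp => HS' _ Hu _.
  have : size (x :: p) <= #|S|.
    rewrite cardE; apply: uniq_leq_size => // y Hy.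
    by rewrite mem_enum; move/allP: HS'; apply.
  by move=> /= H; lia.
- move: Hpart => /and3P [/eqP Hcov Htriv H0].
  have HxS : x \in S by case: Hsp => /andP [].
  have HxP : x \in cover P by rewrite Hcov.
  set V := pblock P x.
  have HVP : V \in P := pblock_mem HxP.
  have HxV : x \in V by rewrite mem_pblock.
  case: (boolP (all (fun y => y \in V) (x :: p))) => Hall.
  + apply: (IH V HVP x p).
    case: Hsp => HS Hp Hu Hmin; split => // q Hq.
    apply: Hmin; apply/allP => y Hy.
    have [Hsub _] := Hmods V HVP.
    by apply: (subsetP Hsub); move/allP: Hq; apply.
  + have [y Hy HyV] := allPn Hall.
    have HyS : y \in S by case: Hsp => HS _ _ _; move/allP: HS; apply.
    have HyP : y \in cover P by rewrite Hcov.
    have HVyP : pblock P y \in P := pblock_mem HyP.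
    have Hne : V != pblock P y.
      by apply/eqP => E; move: HyV; rewrite E mem_pblock HyP.
    have H2 : 2 <= #|P|.
      have := subset_leq_card (A := [set V; pblock P y]) (B := P).
      rewrite cards2 Hne; apply; apply/subsetP => B; rewrite !inE.
      by case/orP => /eqP ->.
    case: (leqP (size p) 2) => Hsz; first lia.
    have : size (x :: p) <= #|P|.
      rewrite -(size_map (pblock P)) cardE; apply: uniq_leq_size.
        rewrite map_inj_in_uniq; first by case: Hsp.
        move=> y1 y2 H1 H2' E.
        have Hy1 : y1 \in cover P by rewrite Hcov; case: Hsp => HS _ _ _; move/allP: HS; apply.
        have HB := pblock_mem Hy1.
        apply: (two Hsp (Hmods _ HB) Hsz _ H1 H2').
        * apply/negP => Ha; move/negP: Hall; apply.
          have Hx : x \in pblock P y1 by move/allP: Ha; apply; rewrite inE eqxx.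
          by rewrite /V (def_pblock Htriv HB Hx).
        * by rewrite mem_pblock.
        * by rewrite E mem_pblock Hcov; case: Hsp => HS _ _ _; move/allP: HS; apply.
      move=> B /mapP [z Hz ->]; rewrite mem_enum; apply: pblock_mem.
      by rewrite Hcov; case: Hsp => HS _ _ _; move/allP: HS; apply.
    move=> /= H; exact: leq_trans (ltnW H) HPw.
Qed.
End S.

Lemma sp_of_shortest (T : finType) (e : rel T) x p :
  shortest_path e x p -> sp e [set: T] x p.
Proof.
move=> [Hp [Hu Hmin]]; split => //; first by apply/allP => y; rewrite inE.
by move=> q _; apply: Hmin.
Qed.

Theorem proposition27 (T : finType) (e : rel T) (w : nat) :
  simple_graph e -> 1 <= w -> mw_graph_le e w ->
  (forall (x : T) (p : seq T), shortest_path e x p -> size p <= w) /\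
  (w < #|T| ->
   forall P : {set {set T}}, modular_decomposition e w P ->
   forall (x : T) (p : seq T), shortest_path e x p -> 3 <= size p ->
     (exists2 V, V \in P & all (fun y => y \in V) (x :: p)) \/
     (forall V, V \in P -> count (fun y => y \in V) (x :: p) <= 1)).
Proof.
move=> [esym _] _ Hmw; split.
  by move=> x p /sp_of_shortest; apply: (mw_bound esym Hmw).
move=> _ P [_ [_ [_ [Hmods _]]]] x p /sp_of_shortest Hsp H3.
case: (boolP [exists V in P, all (fun y => y \in V) (x :: p)]).
  by move/exists_inP => [V HV Ha]; left; exists V.
move/exists_inPn => Hn; right => V HV.
apply: count_le1; last by case: Hsp.
move=> y1 y2 H1 H2 M1 M2.
exact: (two esym Hsp (Hmods V HV) H3 (Hn V HV) H1 H2 M1 M2).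
Qed.
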